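(* Assume $\bar L>0$ and consider the $l$-th cycle of RPF-SFISTA. Then: (a) the cycle stops (either by a restart in step (iv) or by termination in step (v)) after at most $$\left\lceil(1+Q_l)\log^+_1\!\left(\frac{C_{\bar\mu}(z_{l-1})\,\zeta_l^2}{\chi\hat\epsilon^2}\right)+1\right\rceil+\left\lceil\frac{\log^+_0\big(2\bar L/((1-\chi)\underline M_l)\big)}{\log\beta}\right\rceil$$ ACG iterations/resolvent evaluations; (b) if the cycle terminates in step (v), its output $(y,v,\xi,L)$ satisfies $\phi(\xi)\le\min\{\phi(z_0),\phi(y)\}$ and $\bar M_0\le L\le\max\{\bar M_0,\kappa\bar L\}$, and $(y,v)$ is an $\hat\epsilon$-optimal solution; (c) if $\mu_{l-1}\in(0,\bar\mu]$, then the cycle never restarts and terminates in step (v) with an output as in (b), within the number of ACG iterations/resolvent evaluations given in (a).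
   Context: Setup. Let $f:\mathbb R^n\to\mathbb R$ be convex and differentiable with $\|\nabla f(z')-\nabla f(z)\|\le\bar L\|z'-z\|$ for all $z,z'\in\mathbb R^n$ (some $\bar L\ge0$). Let $h:\mathbb R^n\to(-\infty,\infty]$ be proper, lower semicontinuous and convex with domain $\mathcal H$. Let $\phi:=f+h$ be $\bar\mu$-strongly convex for some $\bar\mu>0$, with (unique) minimizer $z^*$. Write $\ell_f(u;x):=f(x)+\langle\nabla f(x),u-x\rangle$. Define $C_{\bar\mu}(z):=\frac{8}{\bar\mu}[\phi(z)-\phi(z^* )]$ and $\kappa:=2\beta/(1-\chi)$. For $t>0$, $b\ge0$ let $\log^+_b(t):=\max\{\log t,b\}$. A pair $(y,v)$ is an $\hat\epsilon$-optimal solution if $v\in\nabla f(y)+\partial h(y)$ and $\|v\|\le\hat\epsilon$. RPF-SFISTA. Parameters $\chi\in(0,1)$, $\beta>1$; inputs $\mu_0>0$, $\bar M_0>0$, $z_0\in\mathcal H$, $\hat\epsilon>0$. The method runs in cycles $l=1,2,\dots$. At the start of cycle $l$: choose $\underline M_l\in[\max\{\bar M_{l-1}/4,\bar M_0\},\bar M_{l-1}]$ (so $\underline M_1=\bar M_0$), set $\mu:=\mu_{l-1}$, $x_0:=z_{l-1}$, $\xi_0:=y_0:=x_0$, $A_0:=0$, $\tau_0:=1$, $L_0:=\underline M_l$. Then for $j=1,2,\dots$: (i) set $L_j:=L_{j-1}$; (ii) compute $a_{j-1}=\frac{\tau_{j-1}+\sqrt{\tau_{j-1}^2+4\tau_{j-1}A_{j-1}L_j}}{2L_j}$,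 $\tilde x_{j-1}=\frac{A_{j-1}y_{j-1}+a_{j-1}x_{j-1}}{A_{j-1}+a_{j-1}}$, $y_j=\arg\min_{u}\{\ell_f(u;\tilde x_{j-1})+h(u)+\frac{L_j}{2}\|u-\tilde x_{j-1}\|^2\}$; if $f(y_j)\le\ell_f(y_j;\tilde x_{j-1})+\frac{(1-\chi)L_j}{4}\|y_j-\tilde x_{j-1}\|^2$ go to (iii), otherwise replace $L_j$ by $\beta L_j$ and repeat (ii); (iii) set $\xi_j:=y_j$ if $\phi(y_j)\le\phi(\xi_{j-1})$ and $\xi_j:=\xi_{j-1}$ otherwise; $A_j:=A_{j-1}+a_{j-1}$; $\tau_j:=\tau_{j-1}+a_{j-1}\mu/2$; $s_j:=L_j(\tilde x_{j-1}-y_j)$; $x_j:=\tau_j^{-1}[\mu a_{j-1}y_j/2+\tau_{j-1}x_{j-1}-a_{j-1}s_j]$; $v_j:=\nabla f(y_j)-\nabla f(\tilde x_{j-1})+s_j$; (iv) if $\|\xi_j-x_0\|^2<\chi A_jL_j\|y_j-\tilde x_{j-1}\|^2$, the cycle ends with a restart: set $z_l:=\xi_j$, $\bar M_l:=L_j$, $\mu_l:=\mu/2$ and start cycle $l+1$; (v) otherwise, if $\|v_j\|\le\hat\epsilon$, stop and output $(y,v,\xi,L):=(y_j,v_j,\xi_j,L_j)$; else go to iteration $j+1$. Each computation of a point $y_j$ in (ii) (including repetitions in the line search) counts as one ACG iteration/resolvent evaluation. Cycle quantities: $\zeta_l:=\bar L+\max\{\underline M_l,\kappa\bar L\}$ and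 $Q_l:=2\sqrt2\sqrt{\max\{\underline M_l,\kappa\bar L\}/\mu_{l-1}}$. *)

(* Defs.v *)
From HB Require Import structures.
From mathcomp Require Import all_boot all_order all_algebra.
From mathcomp Require Import all_classical all_reals all_analysis.
Set Implicit Arguments. Unset Strict Implicit. Unset Printing Implicit Defensive.
Import Order.TTheory GRing.Theory Num.Theory.
Local Open Scope ring_scope.

Definition dotv {R : realType} {n : nat} (u v : 'rV[R]_n) : R :=
  \sum_(i < n) u ord0 i * v ord0 i.
Definition normv {R : realType} {n : nat} (u : 'rV[R]_n) : R :=
  Num.sqrt (dotv u u).

Definition lf {R : realType} {n : nat} (f : 'rV[R]_n -> R)
  (gf : 'rV[R]_n -> 'rV[R]_n) (x u : 'rV[R]_n) : R :=
  f x + dotv (gf x) (u - x).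

Definition is_gradient {R : realType} {n : nat} (f : 'rV[R]_n -> R)
  (gf : 'rV[R]_n -> 'rV[R]_n) : Prop :=
  forall x (eps : R), 0 < eps -> exists2 d : R, 0 < d &
    forall y, normv (y - x) < d -> `|f y - lf f gf x y| <= eps * normv (y - x).

Definition convex_fun {R : realType} {n : nat} (f : 'rV[R]_n -> R) : Prop :=
  forall x y : 'rV[R]_n, forall t : R, 0 <= t <= 1 ->
    f (t *: x + (1 - t) *: y) <= t * f x + (1 - t) * f y.

Definition lipschitz_grad {R : realType} {n : nat}
  (gf : 'rV[R]_n -> 'rV[R]_n) (Lbar : R) : Prop :=
  forall z z', normv (gf z' - gf z) <= Lbar * normv (z' - z).

Definition proper_fun {R : realType} {n : nat} (h : 'rV[R]_n -> \bar R) : Prop :=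
  (exists x, (h x < +oo)%E) /\ (forall x, (-oo < h x)%E).

Definition lsc_fun {R : realType} {n : nat} (h : 'rV[R]_n -> \bar R) : Prop :=
  forall x (c : R), (c%:E < h x)%E -> exists2 d : R, 0 < d &
    forall y, normv (y - x) < d -> (c%:E < h y)%E.

Definition convex_efun {R : realType} {n : nat} (h : 'rV[R]_n -> \bar R) : Prop :=
  forall x y : 'rV[R]_n, forall t : R, 0 < t < 1 ->
    (h (t *: x + (1 - t) *: y)%R <= t%:E * h x + (1 - t)%:E * h y)%E.

Definition phi {R : realType} {n : nat} (f : 'rV[R]_n -> R)
  (h : 'rV[R]_n -> \bar R) (x : 'rV[R]_n) : \bar R := ((f x)%:E + h x)%E.

Definition strongly_convex_efun {R : realType} {n : nat}
  (g : 'rV[R]_n -> \bar R) (mu : R) : Prop :=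
  forall x y : 'rV[R]_n, forall t : R, 0 < t < 1 ->
    (g (t *: x + (1 - t) *: y)%R <= t%:E * g x + (1 - t)%:E * g y
       - (mu / 2 * t * (1 - t) * normv (x - y) ^+ 2)%:E)%E.

Definition is_minimizer {R : realType} {n : nat} (g : 'rV[R]_n -> \bar R)
  (u : 'rV[R]_n) : Prop := forall w, (g u <= g w)%E.

Definition subdiff {R : realType} {n : nat} (h : 'rV[R]_n -> \bar R)
  (y v : 'rV[R]_n) : Prop :=
  h y \is a fin_num /\ forall u, (h y + (dotv v (u - y))%:E <= h u)%E.

Definition logplus {R : realType} (b t : R) : R := Num.max (ln t) b.

(* objective of the resolvent subproblem in step (ii) *)
Definition prox_obj {R : realType} {n : nat} (f : 'rV[R]_n -> R)
  (gf : 'rV[R]_n -> 'rV[R]_n) (h : 'rV[R]_n -> \bar R) (L : R)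
  (xt : 'rV[R]_n) : 'rV[R]_n -> \bar R :=
  fun u => ((lf f gf xt u + L / 2 * normv (u - xt) ^+ 2)%:E + h u)%E.

(* line-search acceptance test of step (ii) *)
Definition ls_test {R : realType} {n : nat} (f : 'rV[R]_n -> R)
  (gf : 'rV[R]_n -> 'rV[R]_n) (chi L : R) (xt y : 'rV[R]_n) : Prop :=
  f y <= lf f gf xt y + (1 - chi) * L / 4 * normv (y - xt) ^+ 2.

Definition acg_a {R : realType} (tau A L : R) : R :=
  (tau + Num.sqrt (tau ^+ 2 + 4 * tau * A * L)) / (2 * L).
Definition acg_xt {R : realType} {n : nat} (A : R) (y : 'rV[R]_n) (a : R)
  (x : 'rV[R]_n) : 'rV[R]_n := (A + a)^-1 *: (A *: y + a *: x).

(* The (infinite) sequence of quantities generated inside one cycle.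
   tL j = L_j (accepted), tk j = number of beta-increases in the line search
   of iteration j (so iteration j uses tk j + 1 resolvent evaluations),
   ta j = a_j, txt j = x~_j, ty j = y_j, tx j = x_j, tA j = A_j,
   ttau j = tau_j, txi j = xi_j, ts j = s_j, tv j = v_j. *)
Record ctrace (R : realType) (n : nat) := CTrace {
  tL : nat -> R; tk : nat -> nat; ta : nat -> R; txt : nat -> 'rV[R]_n;
  ty : nat -> 'rV[R]_n; tx : nat -> 'rV[R]_n; tA : nat -> R; ttau : nat -> R;
  txi : nat -> 'rV[R]_n; ts : nat -> 'rV[R]_n; tv : nat -> 'rV[R]_n }.

(* tr is a run of the iterations (i)-(iii) of a cycle started with
   mu := mu, x0 := x0, L_0 := Mlow (iteration j.+1 described below) *)
Definition cycle_run {R : realType} {n : nat} (f : 'rV[R]_n -> R)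
  (gf : 'rV[R]_n -> 'rV[R]_n) (h : 'rV[R]_n -> \bar R) (chi beta mu : R)
  (x0 : 'rV[R]_n) (Mlow : R) (tr : ctrace R n) : Prop :=
  [/\ tL tr 0 = Mlow, tA tr 0 = 0, ttau tr 0 = 1 &
      [/\ tx tr 0 = x0, ty tr 0 = x0 & txi tr 0 = x0]] /\
  forall j : nat,
    [/\ tL tr j.+1 = beta ^+ (tk tr j.+1) * tL tr j,
        (forall i, (i < tk tr j.+1)%N ->
           let Li := beta ^+ i * tL tr j in
           let ai := acg_a (ttau tr j) (tA tr j) Li in
           let xti := acg_xt (tA tr j) (ty tr j) ai (tx tr j) in
           exists2 u, is_minimizer (prox_obj f gf h Li xti) u &
                      ~ ls_test f gf chi Li xti u),
        ta tr j = acg_a (ttau tr j) (tA tr j) (tL tr j.+1) &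
     [/\ txt tr j = acg_xt (tA tr j) (ty tr j) (ta tr j) (tx tr j),
        is_minimizer (prox_obj f gf h (tL tr j.+1) (txt tr j)) (ty tr j.+1) &
        ls_test f gf chi (tL tr j.+1) (txt tr j) (ty tr j.+1)]] /\
    [/\ txi tr j.+1 = (if (phi f h (ty tr j.+1) <= phi f h (txi tr j))%E
                       then ty tr j.+1 else txi tr j),
        tA tr j.+1 = tA tr j + ta tr j &
    [/\ ttau tr j.+1 = ttau tr j + ta tr j * mu / 2,
        ts tr j.+1 = tL tr j.+1 *: (txt tr j - ty tr j.+1),
        tx tr j.+1 = (ttau tr j.+1)^-1 *:
           ((mu * ta tr j / 2) *: ty tr j.+1 + ttau tr j *: tx tr j
             - ta tr j *: ts tr j.+1) &
        tv tr j.+1 = gf (ty tr j.+1) - gf (txt tr j) + ts tr j.+1]].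

(* step (iv) restart test at iteration j >= 1 *)
Definition restart_at {R : realType} {n : nat} (chi : R) (x0 : 'rV[R]_n)
  (tr : ctrace R n) (j : nat) : Prop :=
  normv (txi tr j - x0) ^+ 2 <
    chi * tA tr j * tL tr j * normv (ty tr j - txt tr j.-1) ^+ 2.

(* step (v) termination at iteration j >= 1 *)
Definition terminate_at {R : realType} {n : nat} (chi : R) (x0 : 'rV[R]_n)
  (eps : R) (tr : ctrace R n) (j : nat) : Prop :=
  ~ restart_at chi x0 tr j /\ normv (tv tr j) <= eps.

Definition stops_at {R : realType} {n : nat} (chi : R) (x0 : 'rV[R]_n)
  (eps : R) (tr : ctrace R n) (j : nat) : Prop :=
  restart_at chi x0 tr j \/ terminate_at chi x0 eps tr j.

Definition first_stop {R : realType} {n : nat} (chi : R) (x0 : 'rV[R]_n)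
  (eps : R) (tr : ctrace R n) (J : nat) : Prop :=
  [/\ (0 < J)%N, stops_at chi x0 eps tr J &
      forall j, (0 < j < J)%N -> ~ stops_at chi x0 eps tr j].

Definition acg_count {R : realType} {n : nat} (tr : ctrace R n) (J : nat) : nat :=
  \sum_(1 <= j < J.+1) (tk tr j).+1.

(* RPF-SFISTA has run cycles 1..l: cycles 1..l-1 ended with a restart, and
   cycle l was started (mu i, z i, Mbar i as in the paper, Mlow i = M_l underline,
   tr i = quantities generated in cycle i). *)
Definition method_run {R : realType} {n : nat} (f : 'rV[R]_n -> R)
  (gf : 'rV[R]_n -> 'rV[R]_n) (h : 'rV[R]_n -> \bar R) (chi beta mu0 Mbar0 : R)
  (z0 : 'rV[R]_n) (eps : R) (mu : nat -> R) (z : nat -> 'rV[R]_n)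
  (Mbar Mlow : nat -> R) (tr : nat -> ctrace R n) (l : nat) : Prop :=
  [/\ mu 0%N = mu0, z 0%N = z0, Mbar 0%N = Mbar0 &
      (forall i, (0 < i <= l)%N ->
         Num.max (Mbar i.-1 / 4) Mbar0 <= Mlow i <= Mbar i.-1 /\
         cycle_run f gf h chi beta (mu i.-1) (z i.-1) (Mlow i) (tr i))] /\
      (forall i, (0 < i < l)%N -> exists J,
         [/\ first_stop chi (z i.-1) eps (tr i) J,
             restart_at chi (z i.-1) (tr i) J,
             z i = txi (tr i) J, Mbar i = tL (tr i) J & mu i = mu i.-1 / 2]).

(* Main.v *)
Require Import Defs.
From HB Require Import structures.
From mathcomp Require Import all_boot all_order all_algebra.
From mathcomp Require Import all_classical all_reals all_analysis.
From mathcomp Require Import ring lra zify.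
Import Order.TTheory GRing.Theory Num.Theory.
Set Implicit Arguments. Unset Strict Implicit.
Local Open Scope ring_scope.

Lemma dotv_ge0 (R : realType) n (u : 'rV[R]_n) : 0 <= dotv u u.
Proof. by apply: sumr_ge0 => i _; rewrite -expr2 sqr_ge0. Qed.

Lemma normv_ge0 (R : realType) n (u : 'rV[R]_n) : 0 <= normv u.
Proof. exact: sqrtr_ge0. Qed.

Lemma normv2 (R : realType) n (u : 'rV[R]_n) : normv u ^+ 2 = dotv u u.
Proof. by rewrite /normv sqr_sqrtr // dotv_ge0. Qed.

Lemma dotvZr (R : realType) n (u v : 'rV[R]_n) c : dotv u (c *: v) = c * dotv u v.
Proof. by rewrite /dotv mulr_sumr; apply: eq_bigr => i _; rewrite !mxE; ring. Qed.

Lemma normvZ (R : realType) n (u : 'rV[R]_n) c : 0 <= c -> normv (c *: u) = c * normv u.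
Proof.
move=> c0; rewrite /normv.
have -> : dotv (c *: u) (c *: u) = c ^+ 2 * dotv u u.
  by rewrite /dotv mulr_sumr; apply: eq_bigr => i _; rewrite !mxE; ring.
by rewrite sqrtrM ?sqr_ge0 // sqrtr_sqr ger0_norm.
Qed.

Lemma young (R : realType) n (p q : 'rV[R]_n) lam : 0 < lam ->
  2 * dotv p q <= lam * dotv p p + dotv q q / lam.
Proof.
move=> l0; rewrite /dotv mulr_sumr mulr_sumr mulr_suml -big_split /=.
apply: ler_sum => i _.
have -> : lam * (p ord0 i * p ord0 i) + q ord0 i * q ord0 i / lam
   = 2 * (p ord0 i * q ord0 i) + (lam * p ord0 i - q ord0 i) ^+ 2 / lam.
  by field; rewrite gt_eqF.
by rewrite lerDl divr_ge0 ?sqr_ge0 ?ltW.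
Qed.

Lemma dotvC (R : realType) n (u v : 'rV[R]_n) : dotv u v = dotv v u.
Proof. by apply: eq_bigr => i _; rewrite mulrC. Qed.
Lemma dotvDr (R : realType) n (u v w : 'rV[R]_n) : dotv u (v + w) = dotv u v + dotv u w.
Proof. by rewrite /dotv -big_split /=; apply: eq_bigr => i _; rewrite !mxE; ring. Qed.
Lemma dotvDl (R : realType) n (u v w : 'rV[R]_n) : dotv (v + w) u = dotv v u + dotv w u.
Proof. by rewrite /dotv -big_split /=; apply: eq_bigr => i _; rewrite !mxE; ring. Qed.
Lemma dotvZl (R : realType) n (u v : 'rV[R]_n) c : dotv (c *: v) u = c * dotv v u.
Proof. by rewrite /dotv mulr_sumr; apply: eq_bigr => i _; rewrite !mxE; ring. Qed.
Lemma dotvNl (R : realType) n (u v : 'rV[R]_n) : dotv (- v) u = - dotv v u.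
Proof. by rewrite /dotv -sumrN; apply: eq_bigr => i _; rewrite !mxE; ring. Qed.
Lemma dotvNr (R : realType) n (u v : 'rV[R]_n) : dotv u (- v) = - dotv u v.
Proof. by rewrite /dotv -sumrN; apply: eq_bigr => i _; rewrite !mxE; ring. Qed.
Lemma dotvBr (R : realType) n (u v w : 'rV[R]_n) : dotv u (v - w) = dotv u v - dotv u w.
Proof. by rewrite dotvDr dotvNr. Qed.
Lemma dotvBl' (R : realType) n (u v w : 'rV[R]_n) : dotv (v - w) u = dotv v u - dotv w u.
Proof. by rewrite dotvDl dotvNl. Qed.
Lemma dotv0l (R : realType) n (u : 'rV[R]_n) : dotv 0 u = 0.
Proof. by rewrite /dotv big1 // => i _; rewrite mxE mul0r. Qed.

Lemma fin_ex (R : realType) (e : \bar R) : (-oo < e)%E -> (e < +oo)%E -> exists r : R, e = r%:E.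
Proof. by case: e => [r| |] //; exists r. Qed.

Lemma le_small_t (R : realType) (X Y K : R) : 0 <= K ->
  (forall t, 0 < t < 1 -> X <= Y + t * K) -> X <= Y.
Proof.
move=> K0 H; rewrite leNgt; apply/negP => XY.
set D := X - Y.
have D0 : 0 < D by rewrite subr_gt0.
set t := D / (2 * (K + D + 1)).
have den : 0 < 2 * (K + D + 1) by rewrite mulr_gt0 //; lra.
have t0 : 0 < t by rewrite divr_gt0.
have t1 : t < 1.
  by rewrite /t ltr_pdivrMr //; lra.
have := H t; rewrite t0 t1 => /(_ isT).
have : t * K < D.
  rewrite /t mulrAC ltr_pdivrMr //.
  nra.
rewrite /D; lra.
Qed.

Lemma dotv0r (R : realType) n (u : 'rV[R]_n) : dotv u 0 = 0.
Proof. by rewrite /dotv big1 // => i _; rewrite mxE mulr0. Qed.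

Lemma grad_ineq (R : realType) n (f : 'rV[R]_n -> R) gf :
  convex_fun f -> is_gradient f gf -> forall z w, lf f gf z w <= f w.
Proof.
move=> cf gr z w; rewrite /lf.
rewrite leNgt; apply/negP => H.
set D := f z + dotv (gf z) (w - z) - f w.
have D0 : 0 < D by rewrite /D subr_gt0.
set N := normv (w - z).
have N0 : 0 <= N := normv_ge0 (w - z).
set e := D / (N + 1).
have e0 : 0 < e by rewrite divr_gt0 //; lra.
have [d d0 Hd] := gr z e e0.
set t := Num.min (1/2) (d / (2 * (N + 1))).
have t0 : 0 < t by rewrite lt_min; apply/andP; split; rewrite ?divr_gt0 //; lra.
have t1 : t < 1 by rewrite gt_min; apply/orP; left; lra.
have ye : t *: w + (1 - t) *: z - z = t *: (w - z).
  by apply/rowP => i; rewrite !mxE; ring.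
have tN : t * N < d.
  have : t <= d / (2 * (N + 1)) by rewrite ge_min lexx orbT.
  rewrite ler_pdivlMr; last lra.
  move=> h1; nra.
have Habs := Hd (t *: w + (1 - t) *: z).
rewrite ye (normvZ _ (ltW t0)) in Habs.
have {Habs} Habs := Habs tN.
rewrite /lf ye dotvZr in Habs.
have := cf w z t; rewrite (ltW t0) (ltW t1) => /(_ isT) Hc.
have eN : e * N < D.
  rewrite /e mulrAC ltr_pdivrMr; last lra.
  nra.
move: Habs; rewrite ler_norml => /andP [Hl _].
have : t * (f z + dotv (gf z) (w - z) - f w) <= e * (t * N).
  rewrite /N; move: Hl Hc; set fy := f _; set dd := dotv _ _; move=> Hl Hc.
  rewrite !mulrDr mulrN; lra.
rewrite -/D => h2.
have : t * D < t * D by nra.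
by rewrite ltxx.
Qed.

Lemma dotvBl (R : realType) n (u v w : 'rV[R]_n) : dotv (u - v) w = dotv u w - dotv v w.
Proof. by rewrite /dotv -sumrB; apply: eq_bigr => i _; rewrite !mxE; ring. Qed.

Lemma lip_sq (R : realType) n (gf : 'rV[R]_n -> 'rV[R]_n) Lbar : 0 <= Lbar ->
  lipschitz_grad gf Lbar -> forall a b,
  dotv (gf a - gf b) (gf a - gf b) <= Lbar ^+ 2 * dotv (a - b) (a - b).
Proof.
move=> L0 lg a b; have := lg b a.
rewrite -!normv2 => H.
have p0 := normv_ge0 (gf a - gf b).
have q0 := normv_ge0 (a - b).
have Lq : 0 <= Lbar * normv (a - b) by rewrite mulr_ge0.
rewrite -exprMn !expr2; nra.
Qed.

Lemma inner_lip (R : realType) n (gf : 'rV[R]_n -> 'rV[R]_n) Lbar : 0 < Lbar ->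
  lipschitz_grad gf Lbar -> forall x d t, 0 < t ->
  dotv (gf (x + t *: d) - gf x) d <= Lbar * t * dotv d d.
Proof.
move=> L0 lg x d t t0.
have := young (gf (x + t *: d) - gf x) d (lam := (Lbar * t)^-1).
rewrite invr_gt0 mulr_gt0 // => /(_ isT) Y.
have := lip_sq (ltW L0) lg (x + t *: d) x.
have -> : x + t *: d - x = t *: d by apply/rowP => i; rewrite !mxE; ring.
have -> : dotv (t *: d) (t *: d) = t ^+ 2 * dotv d d.
  by rewrite /dotv mulr_sumr; apply: eq_bigr => i _; rewrite !mxE; ring.
move=> Lp.
have dd0 := dotv_ge0 d.
set pp := dotv (gf (x + t *: d) - gf x) (gf (x + t *: d) - gf x) in Y Lp.
set pd := dotv (gf (x + t *: d) - gf x) d in Y *.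
have Lt0 : 0 < Lbar * t by rewrite mulr_gt0.
have e1 : (Lbar * t)^-1 * pp <= Lbar * t * dotv d d.
  rewrite ler_pdivrMl //.
  by apply: (le_trans Lp); rewrite le_eqVlt; apply/orP; left; apply/eqP; ring.
have e2 : dotv d d / (Lbar * t)^-1 = Lbar * t * dotv d d.
  by rewrite invrK mulrC.
lra.
Qed.

Lemma descent (R : realType) n (f : 'rV[R]_n -> R) gf Lbar :
  convex_fun f -> is_gradient f gf -> 0 < Lbar -> lipschitz_grad gf Lbar ->
  forall x y, f y <= lf f gf x y + Lbar / 2 * dotv (y - x) (y - x).
Proof.
move=> cf gr L0 lg x y.
set d := y - x.
have dd0 := dotv_ge0 d.
have main : forall N : nat, (0 < N)%N ->
    f y <= lf f gf x y + Lbar / 2 * dotv d d + Lbar * dotv d d / (2 * N%:R).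
  move=> N N0.
  have NR : 0 < N%:R :> R by rewrite ltr0n.
  set z := fun m : nat => x + (m%:R / N%:R) *: d.
  have IH : forall m, f (z m) <= f x + (m%:R / N%:R) * dotv (gf x) d
       + Lbar * dotv d d * (m%:R * (m%:R + 1)) / (2 * N%:R ^+ 2).
    elim=> [|m IH].
      have -> : z 0%N = x by apply/rowP => i; rewrite /z !mxE; ring.
      rewrite !mul0r mulr0 mul0r; lra.
    have g := grad_ineq cf gr (z m.+1) (z m).
    rewrite /lf in g.
    have ez : z m - z m.+1 = (- N%:R^-1) *: d.
      apply/rowP => i; rewrite /z !mxE -natr1; field; rewrite gt_eqF //.
    rewrite ez dotvZr in g.
    have il := inner_lip L0 lg x d (t := m.+1%:R / N%:R).
    rewrite divr_gt0 ?ltr0n // in il; have {il} il := il isT.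
    have eg : dotv (gf (z m.+1)) d = dotv (gf x) d + dotv (gf (z m.+1) - gf x) d.
      by rewrite dotvBl; ring.
    rewrite eg in g.
    move: il; rewrite -/(z m.+1) => il.
    set A := dotv (gf (z m.+1) - gf x) d in g il *.
    set G := dotv (gf x) d in g IH *.
    set M := m%:R in IH.
    have -> : m.+1%:R = M + 1 :> R by rewrite -natr1.
    rewrite -natr1 -/M in il.
    have e : (- N%:R^-1) * (G + A) = - ((G + A) / N%:R) by rewrite mulNr mulrC.
    rewrite e in g.
    have hA : A / N%:R <= Lbar * ((M + 1) / N%:R) * dotv d d / N%:R.
      by rewrite ler_pM2r ?invr_gt0.
    have e2 : (M + 1) / N%:R * G = M / N%:R * G + G / N%:R.
      by field; rewrite gt_eqF.
    have e3 : Lbar * dotv d d * ((M + 1) * (M + 1 + 1)) / (2 * N%:R ^+ 2)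
       = Lbar * dotv d d * (M * (M + 1)) / (2 * N%:R ^+ 2)
         + Lbar * ((M + 1) / N%:R) * dotv d d / N%:R.
      by field; rewrite gt_eqF.
    have e4 : (G + A) / N%:R = G / N%:R + A / N%:R by rewrite mulrDl.
    rewrite e2 e3; lra.
  have := IH N.
  have -> : z N = y by apply/rowP => i; rewrite /z divff ?gt_eqF // !mxE; ring.
  rewrite divff ?gt_eqF // mul1r /lf -/d => H; apply: (le_trans H).
  have -> : Lbar * dotv d d * (N%:R * (N%:R + 1)) / (2 * N%:R ^+ 2)
     = Lbar / 2 * dotv d d + Lbar * dotv d d / (2 * N%:R).
    by field; rewrite gt_eqF.
  lra.
rewrite leNgt; apply/negP => H.
set D := f y - (lf f gf x y + Lbar / 2 * dotv d d).
have D0 : 0 < D by rewrite /D subr_gt0.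
set K := Lbar * dotv d d / 2.
have K0 : 0 <= K by rewrite /K divr_ge0 // mulr_ge0 // ltW.
have := archi_boundP (divr_ge0 K0 (ltW D0)).
set N := Num.bound _ => HN.
have N0 : (0 < N)%N.
  by rewrite -(ltr0n R); apply: le_lt_trans HN; rewrite divr_ge0 // ltW.
have := main N N0.
have NR : 0 < N%:R :> R by rewrite ltr0n.
have : Lbar * dotv d d / (2 * N%:R) < D.
  have -> : Lbar * dotv d d / (2 * N%:R) = K / N%:R by rewrite /K; field; rewrite gt_eqF.
  by rewrite ltr_pdivrMr // mulrC -ltr_pdivrMr.
rewrite /D; lra.
Qed.

Lemma proper_fin (R : realType) n (h : 'rV[R]_n -> \bar R) :
  proper_fun h -> exists xp, exists r : R, h xp = r%:E.
Proof.
case=> [[xp hx] hm]; exists xp; exact: fin_ex.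
Qed.

Lemma prox_sub (R : realType) n (f : 'rV[R]_n -> R) gf h L xt y :
  0 < L -> proper_fun h -> convex_efun h ->
  is_minimizer (prox_obj f gf h L xt) y ->
  (exists hy : R, h y = hy%:E) /\
  forall u, (h y + (dotv (L *: (xt - y) - gf xt) (u - y))%:E <= h u)%E.
Proof.
move=> L0 ph ch mn.
set q := fun u => lf f gf xt u + L / 2 * normv (u - xt) ^+ 2.
have Hq : forall u, prox_obj f gf h L xt u = ((q u)%:E + h u)%E by [].
have [xp [r Hr]] := proper_fin ph.
have [hy Hy] : exists hy : R, h y = hy%:E.
  apply: fin_ex; first by case: ph.
  have := mn xp; rewrite !Hq Hr -EFinD.
  by case: (h y) => [r'| |] //= _; rewrite ltry.
split; first by exists hy.
move=> u; rewrite Hy -EFinD.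
case Hu: (h u) => [hu| |]; last 2 first.
- by rewrite leey.
- by have := ph.2 u; rewrite Hu.
rewrite lee_fin.
set s := L *: (xt - y).
set K := L / 2 * dotv (u - y) (u - y).
have K0 : 0 <= K by rewrite /K mulr_ge0 ?dotv_ge0 // divr_ge0 // ltW.
apply: (@le_small_t _ _ _ K K0) => t /andP [t0 t1].
set w := t *: u + (1 - t) *: y.
have Hc := ch u y t; rewrite t0 t1 /= in Hc; have {}Hc := Hc isT.
rewrite -/w Hu Hy -!EFinM -EFinD in Hc.
have := mn w; rewrite !Hq Hy.
have [hw Hw] : exists hw : R, h w = hw%:E.
  apply: fin_ex; first exact: ph.2.
  by apply: (le_lt_trans Hc); rewrite ltry.
rewrite Hw -!EFinD lee_fin => Hm.
rewrite Hw lee_fin in Hc.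
have Iq : q w - q y = t * dotv (gf xt - s) (u - y) + t ^+ 2 * K.
  rewrite /q /lf !normv2.
  have -> : w - xt = (y - xt) + t *: (u - y).
    by apply/rowP => i; rewrite !mxE; ring.
  have -> : s = - L *: (y - xt) by apply/rowP => i; rewrite !mxE; ring.
  rewrite /K !(dotvDr, dotvDl, dotvZl, dotvZr, dotvBl', dotvNl, dotvBr).
  rewrite ?dotvNr ?(dotvC xt y) ?(dotvC u y) ?(dotvC u xt).
  by field.
have e1 : t * (hy + dotv (s - gf xt) (u - y)) <= t * (hu + t * K).
  have : dotv (s - gf xt) (u - y) = - dotv (gf xt - s) (u - y).
    by rewrite !dotvBl'; ring.
  move=> ->.
  move: Iq Hc Hm; set D := dotv (gf xt - s) (u - y) => Iq Hc Hm.
  rewrite mulrBl mul1r in Hc.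
  rewrite mulrDr mulrN mulrDr mulrA -expr2; lra.
by rewrite ler_pM2l in e1.
Qed.

Lemma dotvNN (R : realType) n (a : 'rV[R]_n) : dotv (- a) (- a) = dotv a a.
Proof. by rewrite dotvNl dotvNr opprK. Qed.

Lemma sc_min (R : realType) n (f : 'rV[R]_n -> R) h mubar zs u pu ps :
  0 <= mubar -> strongly_convex_efun (phi f h) mubar -> is_minimizer (phi f h) zs ->
  phi f h u = pu%:E -> phi f h zs = ps%:E ->
  mubar / 2 * dotv (u - zs) (u - zs) <= pu - ps.
Proof.
move=> m0 sc mn Hu Hs.
set N := dotv (u - zs) (u - zs).
have N' : normv (zs - u) ^+ 2 = N.
  by rewrite normv2 /N -dotvNN opprB.
set c := mubar / 2 * N.
apply: (@le_small_t _ _ _ c).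
  by rewrite /c mulr_ge0 ?divr_ge0 ?dotv_ge0.
move=> t /andP [t0 t1].
have := sc zs u (1 - t); rewrite subr_gt0 t1 /= ltrBlDr ltrDl t0 => /(_ isT).
rewrite Hu Hs N' => H.
have := mn ((1 - t) *: zs + (1 - (1 - t)) *: u) ; rewrite Hs => H2.
have := le_trans H2 H; rewrite -!EFinM -!EFinD lee_fin => H3.
have e : (1 - t) * ps + (1 - (1 - t)) * pu - mubar / 2 * (1 - t) * (1 - (1 - t)) * N
  = ps + t * (pu - ps) - t * (1 - t) * c by rewrite /c; ring.
rewrite e in H3.
have : t * c - t * (t * c) <= t * (pu - ps) by lra.
rewrite -mulrBr ler_pM2l // => H4.
lra.
Qed.

Lemma lin_lb (R : realType) n (f : 'rV[R]_n -> R) gf h L xt y :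
  convex_fun f -> is_gradient f gf ->
  0 < L -> proper_fun h -> convex_efun h ->
  is_minimizer (prox_obj f gf h L xt) y ->
  exists hy : R, h y = hy%:E /\ forall u,
    ((lf f gf xt y + hy + dotv (L *: (xt - y)) (u - y))%:E <= phi f h u)%E.
Proof.
move=> cf gr L0 ph ch mn.
have [[hy Hy] Hs] := prox_sub L0 ph ch mn.
exists hy; split => // u.
have Hu := Hs u; rewrite Hy in Hu.
have Gu := grad_ineq cf gr xt u.
rewrite /phi.
apply: le_trans (_ : ((f u)%:E + (hy + dotv (L *: (xt - y) - gf xt) (u - y))%:E <= _)%E); last first.
  by rewrite leeD2l // -EFinD.
rewrite -EFinD lee_fin.
move: Gu; rewrite /lf !dotvBl' !dotvBr; lra.
Qed.

Lemma lb_sc (R : realType) n (f : 'rV[R]_n -> R) gf h mubar mu L xt y :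
  convex_fun f -> is_gradient f gf ->
  0 < L -> proper_fun h -> convex_efun h ->
  strongly_convex_efun (phi f h) mubar -> 0 <= mu <= mubar ->
  is_minimizer (prox_obj f gf h L xt) y ->
  exists py : R, phi f h y = py%:E /\ forall w pw, phi f h w = pw%:E ->
    py - 2 * (f y - lf f gf xt y) + dotv (L *: (xt - y)) (w - y)
      + mu / 4 * dotv (w - y) (w - y) <= pw.
Proof.
move=> cf gr L0 ph ch sc /andP [m0 m1] mn.
have [hy [Hy Hl]] := lin_lb cf gr L0 ph ch mn.
exists (f y + hy); split; first by rewrite /phi Hy.
move=> w pw Hw.
set s := L *: (xt - y).
set m := (1/2) *: w + (1 - 1/2) *: y.
have := sc w y (1/2); rewrite Hw /phi Hy -EFinD.
have h12 : (0 < 1/2 :> R) && (1/2 < 1 :> R).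
  have a1 : 0 < 1/2 :> R by lra.
  have a2 : 1/2 < 1 :> R by lra.
  by rewrite a1 a2.
move=> /(_ h12) H.
have := le_trans (Hl m) H; rewrite lee_fin.
have -> : m - y = (1/2) *: (w - y) by apply/rowP => i; rewrite !mxE; ring.
rewrite dotvZr.
have N0 := dotv_ge0 (w - y).
have : mu / 4 * dotv (w - y) (w - y) <= mubar / 4 * dotv (w - y) (w - y).
  by apply: ler_wpM2r => //; lra.
set N := dotv (w - y) (w - y); set D := dotv s (w - y).
move=> h1 h2.
have e : normv (w - y) ^+ 2 = N by rewrite normv2.
rewrite e in h2.
lra.
Qed.

Lemma acg_scalar (R : realType) (A a tau mu L x yt y u xt s xp : R) :
  0 <= A -> 0 < a -> 0 < tau -> 0 <= mu -> L * a ^+ 2 = tau * (A + a) ->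
  xt = (A + a)^-1 * (A * yt + a * x) -> s = L * (xt - y) ->
  xp = (tau + a * mu / 2)^-1 * (mu * a / 2 * y + tau * x - a * s) ->
  0 <= A * (s * (yt - y)) + a * (s * (u - y)) + a * mu / 4 * ((u - y) * (u - y))
     + tau / 2 * ((u - x) * (u - x)) - (tau + a * mu / 2) / 2 * ((u - xp) * (u - xp))
     - (A + a) * L / 2 * ((y - xt) * (y - xt)).
Proof.
move=> A0 a0 t0 m0 eL ext es exp.
have eL' : L = tau * (A + a) / a ^+ 2.
  by rewrite -eL; field; rewrite gt_eqF.
have Aa : A + a != 0 by rewrite gt_eqF //; lra.
have tp : tau + a * mu / 2 != 0.
  rewrite gt_eqF //; have : 0 <= a * mu / 2 by rewrite divr_ge0 // mulr_ge0 // ltW.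
  lra.
set S := a * mu / 4 * (xp - y) ^+ 2 + (tau * (xp - x) + a * s) ^+ 2 / (2 * tau).
have -> : A * (s * (yt - y)) + a * (s * (u - y)) + a * mu / 4 * ((u - y) * (u - y))
     + tau / 2 * ((u - x) * (u - x)) - (tau + a * mu / 2) / 2 * ((u - xp) * (u - xp))
     - (A + a) * L / 2 * ((y - xt) * (y - xt)) = S.
  rewrite /S exp es ext eL'.
  field.
  have am : 0 <= a * mu by rewrite mulr_ge0 // ltW.
  rewrite Aa !gt_eqF //; lra.
apply: addr_ge0; first by rewrite mulr_ge0 ?sqr_ge0 // divr_ge0 // mulr_ge0 // ltW.
by rewrite divr_ge0 ?sqr_ge0 // mulr_ge0 // ltW.
Qed.

Lemma acg_vec (R : realType) n (A a tau mu L : R) (x yt y u : 'rV[R]_n) :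
  0 <= A -> 0 < a -> 0 < tau -> 0 <= mu -> L * a ^+ 2 = tau * (A + a) ->
  forall xt s xp, xt = (A + a)^-1 *: (A *: yt + a *: x) ->
  s = L *: (xt - y) ->
  xp = (tau + a * mu / 2)^-1 *: ((mu * a / 2) *: y + tau *: x - a *: s) ->
  0 <= A * dotv s (yt - y) + a * dotv s (u - y) + a * mu / 4 * dotv (u - y) (u - y)
     + tau / 2 * dotv (u - x) (u - x) - (tau + a * mu / 2) / 2 * dotv (u - xp) (u - xp)
     - (A + a) * L / 2 * dotv (y - xt) (y - xt).
Proof.
move=> A0 a0 t0 m0 eL xt s xp ext es exp.
have H : 0 <= \sum_(i < n) (A * (s ord0 i * (yt - y) ord0 i) + a * (s ord0 i * (u - y) ord0 i)
   + a * mu / 4 * ((u - y) ord0 i * (u - y) ord0 i)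
   + tau / 2 * ((u - x) ord0 i * (u - x) ord0 i)
   - (tau + a * mu / 2) / 2 * ((u - xp) ord0 i * (u - xp) ord0 i)
   - (A + a) * L / 2 * ((y - xt) ord0 i * (y - xt) ord0 i)).
  apply: sumr_ge0 => i _.
  have := @acg_scalar R A a tau mu L (x ord0 i) (yt ord0 i) (y ord0 i) (u ord0 i)
    (xt ord0 i) (s ord0 i) (xp ord0 i) A0 a0 t0 m0 eL.
  rewrite !mxE; apply.
  - by rewrite ext !mxE.
  - by rewrite es !mxE.
  - by rewrite exp !mxE.
by move: H; rewrite !(sumrB, big_split) /= -!mulr_sumr.
Qed.

Lemma acg_a_prop (R : realType) (tau A L : R) : 0 < tau -> 0 <= A -> 0 < L ->
  0 < acg_a tau A L /\ L * (acg_a tau A L) ^+ 2 = tau * (A + acg_a tau A L).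
Proof.
move=> t0 A0 L0; rewrite /acg_a.
set S := Num.sqrt _.
have S0 : 0 <= S := sqrtr_ge0 _.
have S2 : S ^+ 2 = tau ^+ 2 + 4 * tau * A * L.
  rewrite sqr_sqrtr // addr_ge0 ?sqr_ge0 // !mulr_ge0 // ?ltW //.
split; first by rewrite divr_gt0 ?mulr_gt0 //; lra.
apply/eqP; rewrite -subr_eq0; apply/eqP.
have -> : L * ((tau + S) / (2 * L)) ^+ 2 - tau * (A + (tau + S) / (2 * L))
   = (S ^+ 2 - (tau ^+ 2 + 4 * tau * A * L)) / (4 * L).
  by field; rewrite gt_eqF.
by rewrite S2 subrr mul0r.
Qed.

Lemma fail_bound (R : realType) n (f : 'rV[R]_n -> R) gf Lbar chi Li xt u :
  convex_fun f -> is_gradient f gf -> 0 < Lbar -> lipschitz_grad gf Lbar ->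
  chi < 1 -> ~ ls_test f gf chi Li xt u -> Li < 2 * Lbar / (1 - chi).
Proof.
move=> cf gr L0 lg c1 nt.
have De := descent cf gr L0 lg xt u.
have : lf f gf xt u + (1 - chi) * Li / 4 * normv (u - xt) ^+ 2 < f u.
  by rewrite ltNge; apply/negP.
rewrite normv2.
have dd0 := dotv_ge0 (u - xt).
set dd := dotv _ _ in De *.
move=> H.
have H2 : (1 - chi) * Li / 4 * dd < Lbar / 2 * dd by lra.
have dpos : 0 < dd.
  rewrite lt_neqAle dd0 andbT; apply/negP => /eqP d0.
  by move: H2; rewrite -d0 !mulr0 ltxx.
rewrite ltr_pM2r // in H2.
rewrite ltr_pdivlMr; last lra.
lra.
Qed.

Lemma cyc_L (R : realType) n (f : 'rV[R]_n -> R) gf h Lbar chi beta mu x0 M0 tr :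
  convex_fun f -> is_gradient f gf -> 0 < Lbar -> lipschitz_grad gf Lbar ->
  0 < chi < 1 -> 1 < beta -> 0 < M0 ->
  cycle_run f gf h chi beta mu x0 M0 tr ->
  forall j, M0 <= tL tr j <= Num.max M0 (2 * beta / (1 - chi) * Lbar).
Proof.
move=> cf gr L0 lg /andP [c0 c1] b1 M00 [[hL0 _ _ _] Hs].
elim=> [|j IH]; first by rewrite hL0 lexx le_max lexx.
have [[hL hk ha _] _] := Hs j.
case/andP: IH => IH1 IH2.
rewrite hL; apply/andP; split.
  have M1 := IH1.
  apply: le_trans IH1 _; rewrite ler_pMl; first by rewrite exprn_ege1 // ltW.
  lra.
case Ek: (tk tr j.+1) => [|k] in hk *.
  by rewrite expr0 mul1r.
have M1 := IH1.
have [u _ nt] := hk k (ltnSn k).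
have Lk := fail_bound cf gr L0 lg c1 nt.
rewrite exprS -mulrA.
apply: le_trans (_ : beta * (2 * Lbar / (1 - chi)) <= _).
  by rewrite ler_pM2l ?ltW //; lra.
rewrite le_max; apply/orP; right.
by rewrite le_eqVlt; apply/orP; left; apply/eqP; field; lra.
Qed.

Lemma cyc_A (R : realType) n (f : 'rV[R]_n -> R) gf h chi beta mu x0 M0 tr :
  1 < beta -> 0 < M0 -> 0 < mu ->
  cycle_run f gf h chi beta mu x0 M0 tr ->
  forall j, [/\ 0 <= tA tr j, ttau tr j = 1 + mu * tA tr j / 2, 0 < tL tr j,
    0 < ta tr j & tL tr j.+1 * ta tr j ^+ 2 = ttau tr j * (tA tr j + ta tr j)].
Proof.
move=> b1 M00 m0 [[hL0 hA0 ht0 _] Hs].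
have Lpos : forall j, 0 < tL tr j.
  elim=> [|j IH]; first by rewrite hL0.
  have [[hL _ _ _] _] := Hs j.
  by rewrite hL mulr_gt0 // exprn_gt0 // (lt_trans ltr01).
have H1 : forall j, 0 <= tA tr j /\ ttau tr j = 1 + mu * tA tr j / 2.
  elim=> [|j [IA It]]; first by rewrite hA0 ht0 lexx; split => //; rewrite mulr0 mul0r addr0.
  have [[_ _ ha _] [_ hA [htau _ _ _]]] := Hs j.
  have tp : 0 < ttau tr j.
    have : 0 <= mu * tA tr j / 2 by rewrite divr_ge0 // mulr_ge0 // ltW.
    rewrite It; lra.
  have [ap _] := acg_a_prop tp IA (Lpos j.+1).
  rewrite hA htau ha; split; first by rewrite addr_ge0 // ltW.
  by rewrite It; ring.
move=> j; have [IA It] := H1 j.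
have tp : 0 < ttau tr j.
  have : 0 <= mu * tA tr j / 2 by rewrite divr_ge0 // mulr_ge0 // ltW.
  rewrite It; lra.
have [[_ _ ha _] _] := Hs j.
have [ap ae] := acg_a_prop tp IA (Lpos j.+1).
by split => //; rewrite ha.
Qed.

Lemma cyc_fin (R : realType) n (f : 'rV[R]_n -> R) gf h chi beta mu x0 M0 tr p0 :
  proper_fun h -> convex_efun h -> phi f h x0 = p0%:E ->
  cycle_run f gf h chi beta mu x0 M0 tr -> (forall j, 0 < tL tr j) ->
  forall j, exists p, phi f h (ty tr j) = p%:E.
Proof.
move=> ph ch H0 [[_ _ _ [_ hy0 _]] Hs] Lp [|j]; first by exists p0; rewrite hy0.
have [[_ _ _ [_ hm _]] _] := Hs j.
have [[hy Hy] _] := prox_sub (Lp j.+1) ph ch hm.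
by exists (f (ty tr j.+1) + hy); rewrite /phi Hy.
Qed.

Lemma cyc_xi (R : realType) n (f : 'rV[R]_n -> R) gf h chi beta mu x0 M0 tr p0 :
  proper_fun h -> convex_efun h -> phi f h x0 = p0%:E ->
  cycle_run f gf h chi beta mu x0 M0 tr -> (forall j, 0 < tL tr j) ->
  forall j, (phi f h (txi tr j) <= phi f h x0)%E /\ exists p, phi f h (txi tr j) = p%:E.
Proof.
move=> ph ch H0 Hr Lp.
have Hf := cyc_fin ph ch H0 Hr Lp.
case: Hr => [[_ _ _ [_ _ hxi0]] Hs].
elim=> [|j [IH1 IH2]]; first by rewrite hxi0; split => //; exists p0.
have [_ [hxi _ _]] := Hs j.
rewrite hxi; case: ifP => // H; split => //.
exact: le_trans H IH1.
Qed.

Lemma cyc_xi_y (R : realType) n (f : 'rV[R]_n -> R) gf h chi beta mu x0 M0 tr :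
  cycle_run f gf h chi beta mu x0 M0 tr ->
  forall j, (phi f h (txi tr j.+1) <= phi f h (ty tr j.+1))%E.
Proof.
move=> [_ Hs] j; have [_ [hxi _ _]] := Hs j.
rewrite hxi; case: ifP => H //.
by apply: ltW; rewrite ltNge H.
Qed.

Lemma nat_le_ceil (R : realType) (S : nat) (X : R) : (S%:R - 1 < X) -> S%:R <= (Num.ceil X)%:~R :> R.
Proof.
move=> H.
have : ((S%:Z - 1) < Num.ceil X)%R.
  by rewrite ceil_gt_int intrB -pmulrn.
rewrite pmulrn ler_int => H2.
lia.
Qed.

Definition ksum (R : realType) n (tr : ctrace R n) J := (\sum_(1 <= j < J.+1) tk tr j)%N.

Lemma cyc_count (R : realType) n (f : 'rV[R]_n -> R) gf h Lbar chi beta mu x0 M0 tr :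
  convex_fun f -> is_gradient f gf -> 0 < Lbar -> lipschitz_grad gf Lbar ->
  0 < chi < 1 -> 1 < beta -> 0 < M0 ->
  cycle_run f gf h chi beta mu x0 M0 tr ->
  forall J, tL tr J = beta ^+ ksum tr J * M0 /\
    (ksum tr J = 0%N \/ beta ^+ (ksum tr J).-1 * M0 < 2 * Lbar / (1 - chi)).
Proof.
move=> cf gr L0 lg /andP [c0 c1] b1 M00 [[hL0 _ _ _] Hs].
elim=> [|J [IH1 IH2]].
  by rewrite /ksum big_geq // expr0 mul1r hL0; split => //; left.
rewrite {1 2 3}/ksum big_nat_recr //=.
set S := ksum tr J in IH1 IH2 *.
have [[hL hk _ _] _] := Hs J.
split; first by rewrite hL IH1 mulrA -exprD addnC.
case Ek: (tk tr J.+1) => [|k] in hk *.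
  by rewrite addn0.
right.
have [u _ nt] := hk k (ltnSn k).
have Lk := fail_bound cf gr L0 lg c1 nt.
move: Lk; rewrite IH1 mulrA -exprD.
by have -> : (S + k.+1).-1 = (k + S)%N by lia.
Qed.

Lemma count_bound (R : realType) (Lbar chi beta M0 : R) (S : nat) :
  0 < Lbar -> 0 < chi < 1 -> 1 < beta -> 0 < M0 ->
  (S = 0%N \/ beta ^+ S.-1 * M0 < 2 * Lbar / (1 - chi)) ->
  S%:R <= (Num.ceil (logplus 0 (2 * Lbar / ((1 - chi) * M0)) / ln beta))%:~R :> R.
Proof.
move=> L0 /andP [c0 c1] b1 M00 H.
have lb : 0 < ln beta by rewrite ln_gt0.
set r := 2 * Lbar / ((1 - chi) * M0).
have lp0 : 0 <= logplus 0 r by rewrite /logplus le_max lexx orbT.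
case: H => [-> | H].
  rewrite (_ : (0%N)%:R = (0:int)%:~R :> R) // ler_int ceil_ge0.
  have : 0 <= logplus 0 r / ln beta by rewrite divr_ge0 // ltW.
  lra.
apply: nat_le_ceil.
have rp : beta ^+ S.-1 < r.
  by rewrite /r invfM mulrA ltr_pdivlMr // mulrC.
have bp : 0 < beta ^+ S.-1 by rewrite exprn_gt0 //; lra.
have : ln (beta ^+ S.-1) < ln r.
  by rewrite ltr_ln ?posrE //; apply: lt_trans rp.
rewrite lnXn; last lra.
move=> H1.
have H2 : ln r <= logplus 0 r by rewrite /logplus le_max lexx.
rewrite ltr_pdivlMr //.
case: S H rp bp H1 => [|S] /= H rp bp H1.
  nra.
rewrite -natr1 addrK mulr_natl -mulr_natr; rewrite -mulr_natr in H1; lra.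
Qed.

Lemma cyc_growth (R : realType) n (f : 'rV[R]_n -> R) gf h chi beta mu x0 M0 tr Lmax :
  1 < beta -> 0 < M0 -> 0 < mu ->
  cycle_run f gf h chi beta mu x0 M0 tr -> (forall j, tL tr j <= Lmax) ->
  forall j, (1 + Num.sqrt (mu / (2 * Lmax))) ^+ j <= tA tr j.+1 * tL tr j.+1.
Proof.
move=> b1 M00 m0 Hr LM.
have HA := cyc_A b1 M00 m0 Hr.
case: Hr => [[hL0 hA0 ht0 _] Hs].
have Lmp : 0 < Lmax by apply: lt_le_trans (LM 0%N); have [] := HA 0%N.
set x := Num.sqrt _.
have x0' : 0 <= x := sqrtr_ge0 _.
have x2 : x ^+ 2 = mu / (2 * Lmax) by rewrite sqr_sqrtr // divr_ge0 // ?mulr_ge0 // ltW.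
elim=> [|j IH].
  have [_ [_ hA _]] := Hs 0%N.
  have [_ _ Lp ap ae] := HA 0%N.
  rewrite hA hA0 ht0 add0r mul1r in ae *.
  rewrite expr0 mulrC.
  have : tL tr 1 * ta tr 0 = 1.
    by apply: (mulIf (lt0r_neq0 ap)); rewrite mul1r -mulrA -expr2.
  by move=> ->.
have [[hL _ _ _] [_ hA _]] := Hs j.+1.
have [IA It Lp ap ae] := HA j.+1.
have LL : tL tr j.+1 <= tL tr j.+2.
  rewrite hL ler_pMl //; first by rewrite exprn_ege1 // ltW.
set A := tA tr j.+1 in IA It ae IH hA *; set a := ta tr j.+1 in ap ae hA *.
set L := tL tr j.+1 in Lp LL IH hL *; set L' := tL tr j.+2 in ae LL hL *.
have L'p : 0 < L' by apply: lt_le_trans LL.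
have L'M : L' <= Lmax by apply: LM.
have h1 : mu / 2 * A * A <= L' * a ^+ 2.
  rewrite ae It.
  have : 0 <= A * a by rewrite mulr_ge0 // ltW.
  have : 0 <= A * A by rewrite mulr_ge0.
  nra.
have h2 : x ^+ 2 * (A * A) <= a ^+ 2.
  rewrite x2.
  have : mu / (2 * Lmax) * L' <= mu / 2.
    have q : L' / Lmax <= 1 by rewrite ler_pdivrMr // mul1r.
    have -> : mu / (2 * Lmax) * L' = mu / 2 * (L' / Lmax) by field; rewrite gt_eqF.
    have : 0 < mu / 2 by rewrite divr_gt0.
    nra.
  move=> h3.
  have AA : 0 <= A * A by rewrite mulr_ge0.
  have : mu / (2 * Lmax) * (A * A) * L' <= L' * a ^+ 2 by nra.
  rewrite mulrC ler_pM2l //.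
have h4 : x * A <= a.
  rewrite !expr2 in h2.
  have xA0 : 0 <= x * A by rewrite mulr_ge0.
  rewrite leNgt; apply/negP => hc.
  have : a * a < (x * A) * (x * A) by nra.
  nra.
rewrite hA exprS.
have XA : 0 <= A * L by rewrite mulr_ge0 // ltW.
apply: le_trans (_ : (1 + x) * (A * L) <= _).
  by rewrite ler_pM2l //; lra.
nra.
Qed.

Lemma vbound (R : realType) n (gf : 'rV[R]_n -> 'rV[R]_n) Lbar L (y xt : 'rV[R]_n) :
  0 < Lbar -> lipschitz_grad gf Lbar -> 0 < L ->
  dotv (gf y - gf xt + L *: (xt - y)) (gf y - gf xt + L *: (xt - y))
    <= (Lbar + L) ^+ 2 * dotv (y - xt) (y - xt).
Proof.
move=> L0 lg Lp.
set p := gf y - gf xt; set q := L *: (xt - y).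
have Y := young p q (lam := L / Lbar).
rewrite divr_gt0 // in Y; have {}Y := Y isT.
have pp := lip_sq (ltW L0) lg y xt; rewrite -/p in pp.
have qq : dotv q q = L ^+ 2 * dotv (y - xt) (y - xt).
  rewrite /q dotvZl dotvZr -dotvNN opprB; ring.
clearbody p q.
have e : dotv (p + q) (p + q) = dotv p p + 2 * dotv p q + dotv q q.
  by rewrite !(dotvDl, dotvDr) (dotvC q p); ring.
rewrite e.
set d := dotv (y - xt) (y - xt) in pp qq *.
have d0 : 0 <= d by apply: dotv_ge0.
have e2 : dotv q q / (L / Lbar) = Lbar * L * d.
  by rewrite qq; field; rewrite !gt_eqF.
have e3 : L / Lbar * dotv p p <= L * Lbar * d.
  have : L / Lbar * dotv p p <= L / Lbar * (Lbar ^+ 2 * d).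
    by rewrite ler_pM2l // divr_gt0.
  move/le_trans; apply; rewrite le_eqVlt; apply/orP; left; apply/eqP.
  by field; rewrite gt_eqF.
have e4 : (Lbar + L) ^+ 2 * d = Lbar ^+ 2 * d + 2 * (Lbar * L * d) + L ^+ 2 * d by ring.
rewrite e4; lra.
Qed.

Lemma dist3 (R : realType) n (a b c : 'rV[R]_n) :
  dotv (a - b) (a - b) <= 2 * dotv (a - c) (a - c) + 2 * dotv (b - c) (b - c).
Proof.
rewrite /dotv !mulr_sumr -big_split /=; apply: ler_sum => i _; rewrite !mxE.
have : 0 <= (a ord0 i + b ord0 i - 2 * c ord0 i) ^+ 2 by apply: sqr_ge0.
set A := a ord0 i; set B := b ord0 i; set C := c ord0 i.
move=> H.
have -> : 2 * ((A - C) * (A - C)) + 2 * ((B - C) * (B - C))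
  = (A - B) * (A - B) + (A + B - 2 * C) ^+ 2 by ring.
lra.
Qed.

Lemma acg_step (R : realType) n (f : 'rV[R]_n -> R) gf h mubar chi beta mu x0 M0 tr
    u pu j pyt :
  convex_fun f -> is_gradient f gf -> proper_fun h -> convex_efun h ->
  strongly_convex_efun (phi f h) mubar -> 0 < mu <= mubar -> chi < 1 ->
  1 < beta -> 0 < M0 ->
  cycle_run f gf h chi beta mu x0 M0 tr ->
  phi f h u = pu%:E -> phi f h (ty tr j) = pyt%:E ->
  exists py, phi f h (ty tr j.+1) = py%:E /\
    tA tr j.+1 * (py - pu) + ttau tr j.+1 / 2 * dotv (u - tx tr j.+1) (u - tx tr j.+1)
    + chi / 2 * tA tr j.+1 * tL tr j.+1 *
        dotv (ty tr j.+1 - txt tr j) (ty tr j.+1 - txt tr j)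
    <= tA tr j * (pyt - pu) + ttau tr j / 2 * dotv (u - tx tr j) (u - tx tr j).
Proof.
move=> cf gr ph ch sc /andP [m0 m1] c1 b1 M00 Hr Hu Hyt.
have [IA It _ ap ae] := cyc_A b1 M00 m0 Hr j.
have [_ _ Lp _ _] := cyc_A b1 M00 m0 Hr j.+1.
case: Hr => _ Hs.
have mb : 0 <= mu <= mubar by rewrite m1 ltW.
have [[_ _ _ [hxt hm hls]] [_ hA [htau hs hx _]]] := Hs j.
have [py [Hy LB]] := lb_sc cf gr Lp ph ch sc mb hm.
exists py; split => //.
have tp : 0 < ttau tr j.
  have : 0 <= mu * tA tr j / 2 by rewrite divr_ge0 // mulr_ge0 // ltW.
  rewrite It; lra.
have hx' := hx; rewrite htau in hx'.
have V := acg_vec u IA ap tp (ltW m0) ae hxt hs hx'.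
rewrite -htau in V.
rewrite -hs -hA in LB V.
have L1 := LB _ _ Hu.
have L2 := LB _ _ Hyt.
move: hls; rewrite /ls_test normv2 => hls.
set A := tA tr j in IA It ae hA V L1 L2 *.
set a := ta tr j in ap ae hA V *.
set A' := tA tr j.+1 in hA V *.
set L := tL tr j.+1 in Lp ae V hls *.
set s := ts tr j.+1 in V L1 L2 *.
set y := ty tr j.+1 in V L1 L2 hls *.
set xt := txt tr j in V L1 L2 hls *.
set yt := ty tr j in V L1 L2 *.
set del := f y - lf f gf xt y in L1 L2.
have hdel : 2 * del <= (1 - chi) * L / 2 * dotv (y - xt) (y - xt).
  rewrite /del; lra.
set r := dotv (y - xt) (y - xt) in V hdel *.
have r0 : 0 <= r by apply: dotv_ge0.
set Nu := dotv (u - y) (u - y) in V L1.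
set Nt := dotv (yt - y) (yt - y) in L2.
have Nt0 : 0 <= Nt by apply: dotv_ge0.
have Nu0 : 0 <= Nu by apply: dotv_ge0.
set du := dotv s (u - y) in V L1; set dt := dotv s (yt - y) in V L2.
set X := dotv (u - tx tr j) (u - tx tr j) in V *.
set X' := dotv (u - tx tr j.+1) (u - tx tr j.+1) in V *.
set tau := ttau tr j in tp V *; set tau' := ttau tr j.+1 in V *.
have aL1 : a * (py - 2 * del + du + mu / 4 * Nu) <= a * pu by rewrite ler_wpM2l // ltW.
have aL2 : A * (py - 2 * del + dt) <= A * pyt.
  rewrite ler_wpM2l //; apply: le_trans L2.
  by rewrite lerDl mulr_ge0 // divr_ge0 // ltW.
have ed : A' * (2 * del) <= A' * ((1 - chi) * L / 2 * r).
  by rewrite ler_wpM2l // hA addr_ge0 // ltW.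
rewrite hA in V ed *.
move: aL1 aL2 ed V; rewrite !mulrDr !mulrDl !mulrN.
move=> aL1 aL2 ed V.
nra.
Qed.

Lemma acg_pot (R : realType) n (f : 'rV[R]_n -> R) gf h mubar chi beta mu x0 M0 tr
    u pu p0 :
  convex_fun f -> is_gradient f gf -> proper_fun h -> convex_efun h ->
  strongly_convex_efun (phi f h) mubar -> 0 < mu <= mubar -> 0 <= chi -> chi < 1 ->
  1 < beta -> 0 < M0 ->
  cycle_run f gf h chi beta mu x0 M0 tr ->
  phi f h u = pu%:E -> phi f h x0 = p0%:E ->
  forall j, exists py, phi f h (ty tr j) = py%:E /\
    tA tr j * (py - pu) + ttau tr j / 2 * dotv (u - tx tr j) (u - tx tr j)
    <= 1 / 2 * dotv (u - x0) (u - x0).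
Proof.
move=> cf gr ph ch sc mb c0' c1 b1 M00 Hr Hu H0.
elim=> [|j [pyt [Hyt IH]]].
  case: (Hr) => [[_ hA0 ht0 [hx0 hy0 _]] _].
  exists p0; rewrite hy0 hA0 ht0 hx0; split => //.
  by rewrite mul0r add0r.
have [py [Hy St]] := acg_step cf gr ph ch sc mb c1 b1 M00 Hr Hu Hyt.
exists py; split => //.
apply: le_trans IH; apply: le_trans St.
rewrite lerDl.
case/andP: mb => m0 _.
have [IA _ Lp _ _] := cyc_A b1 M00 m0 Hr j.+1.
have c0 : 0 <= chi / 2 * tA tr j.+1 * tL tr j.+1 * dotv (ty tr j.+1 - txt tr j) (ty tr j.+1 - txt tr j).
  by rewrite !mulr_ge0 ?dotv_ge0 ?divr_ge0 // ltW.
exact: c0.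
Qed.

Lemma no_restart (R : realType) n (f : 'rV[R]_n -> R) gf h mubar chi beta mu x0 M0 tr p0 :
  convex_fun f -> is_gradient f gf -> proper_fun h -> convex_efun h ->
  strongly_convex_efun (phi f h) mubar -> 0 < mu <= mubar -> 0 <= chi -> chi < 1 ->
  1 < beta -> 0 < M0 ->
  cycle_run f gf h chi beta mu x0 M0 tr -> phi f h x0 = p0%:E ->
  forall j, ~ restart_at chi x0 tr j.+1.
Proof.
move=> cf gr ph ch sc mb c0 c1 b1 M00 Hr H0 j.
have m0 : 0 < mu by case/andP: mb.
have Lpos : forall j, 0 < tL tr j by move=> k; have [] := cyc_A b1 M00 m0 Hr k.
have [_ [pu Hu]] := cyc_xi ph ch H0 Hr Lpos j.+1.
have uy := cyc_xi_y Hr j.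
have [pyt [Hyt P]] := acg_pot cf gr ph ch sc mb c0 c1 b1 M00 Hr Hu H0 j.
have [py [Hy St]] := acg_step cf gr ph ch sc mb c1 b1 M00 Hr Hu Hyt.
rewrite Hu Hy lee_fin in uy.
have [IA It _ _ _] := cyc_A b1 M00 m0 Hr j.+1.
have tp : 0 < ttau tr j.+1.
  have : 0 <= mu * tA tr j.+1 / 2 by rewrite divr_ge0 // mulr_ge0 // ltW.
  rewrite It; lra.
have X0 : 0 <= ttau tr j.+1 / 2 * dotv (txi tr j.+1 - tx tr j.+1) (txi tr j.+1 - tx tr j.+1).
  by rewrite mulr_ge0 ?dotv_ge0 // divr_ge0 // ltW.
have AP : 0 <= tA tr j.+1 * (py - pu) by rewrite mulr_ge0 // subr_ge0.
rewrite /restart_at /= !normv2.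
move=> Hre.
have : chi / 2 * tA tr j.+1 * tL tr j.+1 * dotv (ty tr j.+1 - txt tr j) (ty tr j.+1 - txt tr j)
   <= 1 / 2 * dotv (txi tr j.+1 - x0) (txi tr j.+1 - x0) by lra.
lra.
Qed.

Lemma ln_lb (R : realType) (x : R) : 0 < x -> x / (1 + x) <= ln (1 + x).
Proof.
move=> x0.
have h1 : -1 < - (x / (1 + x)).
  rewrite ltrNl opprK ltr_pdivrMr; last lra.
  lra.
have := le_ln1Dx h1.
have -> : 1 + - (x / (1 + x)) = (1 + x)^-1 by field; rewrite gt_eqF //; lra.
rewrite lnV ?posrE; last lra.
lra.
Qed.

Lemma Q_ln (R : realType) (mu Lm : R) : 0 < mu -> 0 < Lm ->
  1 <= (1 + 2 * Num.sqrt 2 * Num.sqrt (Lm / mu)) * ln (1 + Num.sqrt (mu / (2 * Lm))).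
Proof.
move=> m0 L0.
set x := Num.sqrt (mu / (2 * Lm)).
have x0 : 0 < x by rewrite sqrtr_gt0 divr_gt0 // mulr_gt0.
have ex : x * (Num.sqrt 2 * Num.sqrt (Lm / mu)) = 1.
  rewrite /x -!sqrtrM ?divr_ge0 ?mulr_ge0 ?ltW //.
  rewrite (_ : mu / (2 * Lm) * (2 * (Lm / mu)) = 1) ?sqrtr1 //.
  by field; rewrite !gt_eqF.
set w := Num.sqrt 2 * Num.sqrt (Lm / mu) in ex *.
have hl := ln_lb x0.
have w0 : 0 <= w by rewrite mulr_ge0 ?sqrtr_ge0.
have e : 1 + 2 * w = (x + 2) / x.
  by apply: (mulIf (lt0r_neq0 x0)); rewrite mulrDl -mulrA [w * x]mulrC ex mulfVK ?gt_eqF //; ring.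
rewrite -mulrA e.
apply: le_trans (_ : (x + 2) / x * (x / (1 + x)) <= _).
  rewrite (_ : (x + 2) / x * (x / (1 + x)) = (x + 2) / (1 + x)); last first.
    by field; rewrite !gt_eqF //; lra.
  by rewrite ler_pdivlMr; lra.
rewrite ler_pM2l //; rewrite divr_gt0 //; lra.
Qed.

Lemma xi_bound (R : realType) n (f : 'rV[R]_n -> R) h mubar zs (xi x0 : 'rV[R]_n) pxi p0 ps :
  0 < mubar -> strongly_convex_efun (phi f h) mubar -> is_minimizer (phi f h) zs ->
  phi f h xi = pxi%:E -> phi f h x0 = p0%:E -> phi f h zs = ps%:E -> pxi <= p0 ->
  dotv (xi - x0) (xi - x0) <= 8 / mubar * (p0 - ps).
Proof.
move=> m0 sc mn Hxi H0 Hs le.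
have d := dist3 xi x0 zs.
have s1 := sc_min (ltW m0) sc mn Hxi Hs.
have s2 := sc_min (ltW m0) sc mn H0 Hs.
set a := dotv (xi - zs) (xi - zs) in d s1.
set b := dotv (x0 - zs) (x0 - zs) in d s2.
have a' : a <= 2 / mubar * (p0 - ps).
  rewrite -(ler_pM2l (_ : 0 < mubar / 2)) ?divr_gt0 //.
  rewrite mulrA (_ : mubar / 2 * (2 / mubar) = 1) ?mul1r; first lra.
  by field; rewrite gt_eqF.
have b' : b <= 2 / mubar * (p0 - ps).
  rewrite -(ler_pM2l (_ : 0 < mubar / 2)) ?divr_gt0 //.
  rewrite mulrA (_ : mubar / 2 * (2 / mubar) = 1) ?mul1r; first lra.
  by field; rewrite gt_eqF.
have -> : 8 / mubar * (p0 - ps) = 2 * (2 / mubar * (p0 - ps)) + 2 * (2 / mubar * (p0 - ps)).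
  by field; rewrite gt_eqF.
lra.
Qed.

Lemma acg_count_split (R : realType) n (tr : ctrace R n) J :
  acg_count tr J = (ksum tr J + J)%N.
Proof.
rewrite /acg_count /ksum; elim: J => [|J IH]; first by rewrite !big_geq.
rewrite (big_nat_recr J.+1 1 (fun j => (tk tr j).+1)) //.
rewrite (big_nat_recr J.+1 1 (fun j => tk tr j)) //= IH; lia.
Qed.

Lemma cyc_stop (R : realType) n (f : 'rV[R]_n -> R) gf h Lbar mubar zs chi beta mu x0 M0 tr
    eps p0 ps :
  convex_fun f -> is_gradient f gf -> 0 < Lbar -> lipschitz_grad gf Lbar ->
  proper_fun h -> convex_efun h -> 0 < mubar -> strongly_convex_efun (phi f h) mubar ->
  is_minimizer (phi f h) zs ->
  0 < chi < 1 -> 1 < beta -> 0 < mu -> 0 < M0 -> 0 < eps ->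
  cycle_run f gf h chi beta mu x0 M0 tr -> phi f h x0 = p0%:E -> phi f h zs = ps%:E ->
  forall k : nat,
  (1 + 2 * Num.sqrt 2 * Num.sqrt (Num.max M0 (2 * beta / (1 - chi) * Lbar) / mu))
    * logplus 1 (8 / mubar * (p0 - ps) * (Lbar + Num.max M0 (2 * beta / (1 - chi) * Lbar)) ^+ 2
                  / (chi * eps ^+ 2)) <= k%:R ->
  stops_at chi x0 eps tr k.+1.
Proof.
move=> cf gr L0 lg ph ch mb0 sc mn hc b1 m0 M00 e0 Hr H0 Hs k.
have /andP [c0 c1] := hc.
set Lm := Num.max M0 _.
set C := 8 / mubar * (p0 - ps).
set zeta := Lbar + Lm.
set Q := 2 * Num.sqrt 2 * _.
set T := C * zeta ^+ 2 / (chi * eps ^+ 2).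
move=> Hk.
have Lm0 : 0 < Lm by rewrite lt_max M00.
have HL := cyc_L cf gr L0 lg hc b1 M00 Hr.
have Lpos : forall j, 0 < tL tr j by move=> j; have [] := cyc_A b1 M00 m0 Hr j.
have LM : forall j, tL tr j <= Lm by move=> j; case/andP: (HL j).
have G := cyc_growth b1 M00 m0 Hr LM k.
set x := Num.sqrt (mu / (2 * Lm)) in G.
have x0' : 0 < x by rewrite sqrtr_gt0 divr_gt0 // mulr_gt0.
have Qln := Q_ln m0 Lm0; rewrite -/x -/Q in Qln.
have lx : 0 < ln (1 + x) by rewrite ln_gt0 //; lra.
have xk : 0 < (1 + x) ^+ k by rewrite exprn_gt0 //; lra.
have TA : T <= tA tr k.+1 * tL tr k.+1.
  apply: le_trans G.
  case: (leP T 0) => T0; first by apply: le_trans T0 _; apply: ltW.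
  rewrite -ler_ln ?posrE //.
  have lp1 : 1 <= logplus 1 T by rewrite /logplus le_max lexx orbT.
  have lpT : ln T <= logplus 1 T by rewrite /logplus le_max lexx.
  rewrite lnXn; last lra.
  rewrite -mulr_natr.
  apply: (le_trans lpT).
  apply: le_trans (_ : (1 + Q) * logplus 1 T * ln (1 + x) <= _); last first.
    by rewrite [X in _ <= X]mulrC ler_pM2r.
  rewrite mulrAC; rewrite ler_peMl //; lra.
case: (pselect (restart_at chi x0 tr k.+1)) => Hre; first by left.
right; split => //.
move: Hre; rewrite /restart_at /= !normv2 => /negP; rewrite -leNgt => Hre.
have [_ [pxi Hxi]] := cyc_xi ph ch H0 Hr Lpos k.+1.
have [le _] := cyc_xi ph ch H0 Hr Lpos k.+1.
rewrite Hxi H0 lee_fin in le.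
have XB := xi_bound mb0 sc mn Hxi H0 Hs le.
rewrite -/C in XB.
case: Hr => _ Hst.
have [[_ _ _ [_ _ _]] [_ _ [_ hs _ hv]]] := Hst k.
have VB := vbound (ty tr k.+1) (txt tr k) L0 lg (Lpos k.+1).
rewrite -hs -hv in VB.
set r := dotv (ty tr k.+1 - txt tr k) (ty tr k.+1 - txt tr k) in Hre VB.
set vv := dotv (tv tr k.+1) (tv tr k.+1) in VB *.
set AL := tA tr k.+1 * tL tr k.+1 in TA.
have r0 : 0 <= r by apply: dotv_ge0.
have vv0 : 0 <= vv by apply: dotv_ge0.
have zb : (Lbar + tL tr k.+1) ^+ 2 <= zeta ^+ 2.
  rewrite /zeta; have := LM k.+1; have := Lpos k.+1; move=> a1 a2.
  rewrite !expr2; nra.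
have VZ : vv <= zeta ^+ 2 * r.
  exact: (le_trans VB (ler_wpM2r r0 zb)).
have ALe : chi * AL * r <= C by rewrite /AL mulrA; exact: le_trans Hre XB.
have z0 : 0 < zeta by rewrite /zeta; lra.
have C0 : 0 <= C.
  have := mn x0; rewrite H0 Hs lee_fin => pp.
  by rewrite /C mulr_ge0 ?subr_ge0 // divr_ge0 // ltW.
have AL0 : 0 < AL by apply: lt_le_trans xk G.
have vve : vv <= eps ^+ 2.
  apply: le_trans VZ _.
  rewrite leNgt; apply/negP => hz.
  have e2 : 0 < eps ^+ 2 by rewrite exprn_gt0.
  have rp : 0 < r.
    rewrite lt_neqAle r0 andbT; apply/negP => /eqP r00.
    by move: hz; rewrite -r00 mulr0 ltNge ltW.
  have cT : chi * T * r <= C.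
    apply: le_trans ALe; rewrite ler_pM2r // ler_pM2l //.
  have eT : chi * T * r = C * (zeta ^+ 2 * r / eps ^+ 2).
    by rewrite /T; field; rewrite !gt_eqF.
  rewrite eT in cT.
  have g1 : 1 < zeta ^+ 2 * r / eps ^+ 2 by rewrite ltr_pdivlMr // mul1r.
  have Cz : C = 0.
    apply/eqP; rewrite eq_le C0 andbT.
    have : C * (zeta ^+ 2 * r / eps ^+ 2 - 1) <= 0 by rewrite mulrBr mulr1; lra.
    move=> hh; have g2 : 0 < zeta ^+ 2 * r / eps ^+ 2 - 1 by rewrite subr_gt0.
    nra.
  rewrite Cz in ALe.
  have : 0 < chi * AL * r by apply: mulr_gt0 => //; apply: mulr_gt0.
  lra.
have nv0 := normv_ge0 (tv tr k.+1).
rewrite /vv -normv2 in vve.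
rewrite leNgt; apply/negP => hcc.
have : eps ^+ 2 < normv (tv tr k.+1) ^+ 2.
  by rewrite !expr2; nra.
lra.
Qed.

Lemma cyc_a (R : realType) n (f : 'rV[R]_n -> R) gf h Lbar mubar zs chi beta mu x0 M0 tr
    eps p0 ps :
  convex_fun f -> is_gradient f gf -> 0 < Lbar -> lipschitz_grad gf Lbar ->
  proper_fun h -> convex_efun h -> 0 < mubar -> strongly_convex_efun (phi f h) mubar ->
  is_minimizer (phi f h) zs ->
  0 < chi < 1 -> 1 < beta -> 0 < mu -> 0 < M0 -> 0 < eps ->
  cycle_run f gf h chi beta mu x0 M0 tr -> phi f h x0 = p0%:E -> phi f h zs = ps%:E ->
  forall J, (forall j, (0 < j < J)%N -> ~ stops_at chi x0 eps tr j) ->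
  (acg_count tr J)%:R <=
  (Num.ceil ((1 + 2 * Num.sqrt 2 * Num.sqrt (Num.max M0 (2 * beta / (1 - chi) * Lbar) / mu))
    * logplus 1 (8 / mubar * (p0 - ps) * (Lbar + Num.max M0 (2 * beta / (1 - chi) * Lbar)) ^+ 2
                  / (chi * eps ^+ 2)) + 1))%:~R
  + (Num.ceil (logplus 0 (2 * Lbar / ((1 - chi) * M0)) / ln beta))%:~R :> R.
Proof.
move=> cf gr L0 lg ph ch mb0 sc mn hc b1 m0 M00 e0 Hr H0 Hs J HJ.
have St := cyc_stop cf gr L0 lg ph ch mb0 sc mn hc b1 m0 M00 e0 Hr H0 Hs.
set y := (1 + _) * _ in St *.
have y0 : 0 <= y.
  rewrite /y; apply: mulr_ge0.
    by apply: addr_ge0 => //; rewrite !mulr_ge0 // sqrtr_ge0.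
  by rewrite /logplus le_max ler01 orbT.
have Jy : J%:R < y + 2.
  case: J HJ => [|[|j]] HJ; [lra | lra |].
  have ns : ~ stops_at chi x0 eps tr j.+1 by apply: HJ; rewrite /= ltnSn.
  have : j%:R < y by rewrite ltNge; apply/negP => /St.
  rewrite -[j.+2%:R]natr1 -natr1; lra.
have J1 : J%:R <= (Num.ceil (y + 1))%:~R :> R by apply: nat_le_ceil; lra.
have /andP [c0 c1] := hc.
have [_ K] := cyc_count cf gr L0 lg hc b1 M00 Hr J.
have K2 := count_bound L0 hc b1 M00 K.
by rewrite acg_count_split natrD addrC; apply: lerD.
Qed.

Theorem proposition2p1 (R : realType) (n : nat) (f : 'rV[R]_n -> R)
  (gf : 'rV[R]_n -> 'rV[R]_n) (h : 'rV[R]_n -> \bar R)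
  (Lbar mubar : R) (zstar : 'rV[R]_n)
  (chi beta mu0 Mbar0 eps : R) (z0 : 'rV[R]_n)
  (mu : nat -> R) (z : nat -> 'rV[R]_n) (Mbar Mlow : nat -> R)
  (tr : nat -> ctrace R n) (l : nat) :
  convex_fun f -> is_gradient f gf -> 0 <= Lbar -> lipschitz_grad gf Lbar ->
  proper_fun h -> lsc_fun h -> convex_efun h ->
  0 < mubar -> strongly_convex_efun (phi f h) mubar ->
  is_minimizer (phi f h) zstar ->
  0 < chi < 1 -> 1 < beta -> 0 < mu0 -> 0 < Mbar0 -> (h z0 < +oo)%E -> 0 < eps ->
  0 < Lbar -> (0 < l)%N ->
  method_run f gf h chi beta mu0 Mbar0 z0 eps mu z Mbar Mlow tr l ->
  let kappa := 2 * beta / (1 - chi) in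
  let Ml := Mlow l in
  let x0 := z l.-1 in
  let mul := mu l.-1 in
  let trl := tr l in
  let zeta := Lbar + Num.max Ml (kappa * Lbar) in
  let Q := 2 * Num.sqrt 2 * Num.sqrt (Num.max Ml (kappa * Lbar) / mul) in
  let C := 8 / mubar * (fine (phi f h x0) - fine (phi f h zstar)) in
  let N : R :=
    (Num.ceil ((1 + Q) * logplus 1 (C * zeta ^+ 2 / (chi * eps ^+ 2)) + 1))%:~R
    + (Num.ceil (logplus 0 (2 * Lbar / ((1 - chi) * Ml)) / ln beta))%:~R in
  [/\ (* (a) *)
      (forall J : nat, (forall j, (0 < j < J)%N -> ~ stops_at chi x0 eps trl j) ->
         (acg_count trl J)%:R <= N),
      (* (b) *)
      (forall J : nat, first_stop chi x0 eps trl J -> terminate_at chi x0 eps trl J ->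
         let y := ty trl J in let v := tv trl J in
         let xi := txi trl J in let L := tL trl J in
         [/\ (phi f h xi <= phi f h z0)%E, (phi f h xi <= phi f h y)%E,
             Mbar0 <= L <= Num.max Mbar0 (kappa * Lbar),
             subdiff h y (v - gf y) & normv v <= eps]) &
      (* (c) *)
      (0 < mul <= mubar ->
         exists J : nat, first_stop chi x0 eps trl J /\ terminate_at chi x0 eps trl J)].
Proof.
move=> cf gr Lb0 lg ph lsc ch mb0 sc mn hc b1 mu00 M00 hz0 e0 L0 l0 MR.
move=> kappa Ml x0 mul trl zeta Q C N.
case: MR => [[hmu0 hz0' hMb0 Hcyc] Hrest].
have /andP [c0 c1] := hc.
set Mx := Num.max Mbar0 (kappa * Lbar).
have Inv : forall i, (i < l)%N -> [/\ 0 < mu i, exists p, phi f h (z i) = p%:E,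
    (phi f h (z i) <= phi f h z0)%E & Mbar i <= Mx].
  elim=> [|i IH] Hi.
    rewrite hmu0 hz0' hMb0; split => //.
    - have [r Hr] := fin_ex (ph.2 z0) hz0.
      by exists (f z0 + r); rewrite /phi Hr.
    - by rewrite /Mx le_max lexx.
  have [mi [pi Hpi] Hle HM] := IH (ltnW Hi).
  have [J [FS RS Hz HMb Hmu]] := Hrest i.+1 (introT andP (conj (ltn0Sn i) Hi)).
  have [Mlb CR] := Hcyc i.+1 (introT andP (conj (ltn0Sn i) (ltnW Hi))).
  rewrite /= in Mlb CR Hz Hmu.
  have /andP [Ml1 Ml2] := Mlb.
  have Mlp : 0 < Mlow i.+1 by apply: lt_le_trans Ml1; rewrite lt_max M00 orbT.
  have Lpos : forall j, 0 < tL (tr i.+1) j by move=> j; have [] := cyc_A b1 Mlp mi CR j.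
  have [X1 X2] := cyc_xi ph ch Hpi CR Lpos J.
  rewrite Hmu Hz; split => //.
  - by rewrite divr_gt0.
  - exact: le_trans X1 Hle.
  - rewrite HMb; have /andP [_ h2] := cyc_L cf gr L0 lg hc b1 Mlp CR J.
    apply: le_trans h2 _; rewrite ge_max; apply/andP; split.
      exact: le_trans Ml2 HM.
    by rewrite /Mx le_max lexx orbT.
have l1 : (l.-1 < l)%N by rewrite prednK.
have [mul0 [p0 H0] Hle0 HMl] := Inv l.-1 l1.
have [Mlb CR] := Hcyc l (introT andP (conj l0 (leqnn l))).
rewrite -/Ml -/x0 -/mul -/trl in Mlb CR.
rewrite -/x0 in H0 Hle0; rewrite -/mul in mul0.
have /andP [Ml1 Ml2] := Mlb.
have Mlp : 0 < Ml by apply: lt_le_trans Ml1; rewrite lt_max M00 orbT.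
have Lpos : forall j, 0 < tL trl j by move=> j; have [] := cyc_A b1 Mlp mul0 CR j.
have [ps Hs] : exists ps, phi f h zstar = ps%:E.
  have [xp [r Hr]] := proper_fin ph.
  apply: fin_ex.
    by rewrite /phi; case: (h zstar) (ph.2 zstar) => [r'| |] // _; rewrite ?addey // -EFinD ltNyr.
  by apply: le_lt_trans (mn xp) _; rewrite /phi Hr -EFinD ltry.
have Ha := cyc_a cf gr L0 lg ph ch mb0 sc mn hc b1 mul0 Mlp e0 CR H0 Hs.
have Nbound : forall J, (forall j, (0 < j < J)%N -> ~ stops_at chi x0 eps trl j) ->
    (acg_count trl J)%:R <= N.
  move=> J HJ; have := Ha J HJ.
  by rewrite /N /Q /zeta /C /kappa H0 Hs /=.
split => //.
- move=> J [J0 SJ _] TJ y v xi L.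
  have [X1 X2] := cyc_xi ph ch H0 CR Lpos J.
  case: J J0 SJ TJ X1 X2 @y @v @xi @L => // J' _ SJ TJ X1 X2 y v xi L.
  split.
  + exact: le_trans X1 Hle0.
  + exact: cyc_xi_y CR J'.
  + have /andP [h1 h2] := cyc_L cf gr L0 lg hc b1 Mlp CR J'.+1.
    apply/andP; split.
      by apply: le_trans h1; apply: le_trans Ml1; rewrite le_max lexx orbT.
    apply: le_trans h2 _; rewrite ge_max; apply/andP; split.
      exact: le_trans Ml2 HMl.
    by rewrite /Mx le_max lexx orbT.
  + case: CR => _ Hst.
    have [[_ _ _ [_ hm _]] [_ _ [_ hs _ hv]]] := Hst J'.
    have [[hy Hy] Hsub] := prox_sub (Lpos J'.+1) ph ch hm.
    split; first by rewrite /y Hy.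
    move=> u.
    have -> : v - gf y = tL trl J'.+1 *: (txt trl J' - ty trl J'.+1) - gf (txt trl J').
      by rewrite /v /y hv hs; apply/rowP => i; rewrite !mxE; ring.
    exact: Hsub.
  + by case: TJ.
- move=> /andP [m0 m1].
  have mb : 0 < mul <= mubar by rewrite m0 m1.
  have NR := no_restart cf gr ph ch sc mb (ltW c0) c1 b1 Mlp CR H0.
  have Ex : exists j, (0 < j)%N /\ stops_at chi x0 eps trl j.
    case: (pselect (exists j, (0 < j)%N /\ stops_at chi x0 eps trl j)) => // nE.
    exfalso.
    set K := Num.bound `|N|.
    have HK : `|N| < K%:R by apply: archi_boundP.
    have := Nbound K.
    have : forall j, (0 < j < K)%N -> ~ stops_at chi x0 eps trl j.
      by move=> j /andP [j0 _] sj; apply: nE; exists j.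
    move=> hh /(_ hh); rewrite acg_count_split natrD => hc2.
    have : N <= `|N| by apply: ler_norm.
    have : 0 <= (ksum trl K)%:R :> R by apply: ler0n.
    lra.
  pose p := fun j => (0 < j)%N && `[< stops_at chi x0 eps trl j >].
  have pE : exists j, p j.
    case: Ex => j [j0 sj]; exists j; rewrite /p j0 /=; exact/asboolP.
  case: (ex_minnP pE) => J /andP [J0 /asboolP SJ] Jmin.
  exists J; split.
    split => // j /andP [j0 jJ] sj.
    have := Jmin j; rewrite /p j0 /=.
    have -> : `[< stops_at chi x0 eps trl j >] = true by apply/asboolP.
    by move=> /(_ isT); rewrite leqNgt jJ.
  case: SJ => // hr.
  case: J J0 Jmin hr => // J' _ _ hr.
  by case: (NR J').
Qed.
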